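(* Let $m\ge 2$ be even and let $\{1,\dots,m\}=J_1\cup J_2$ be a partition with $|J_1|=|J_2|=m/2$. Consider the two-stage robust lot-sizing problem $$\min_{\mathbf x}\ \sum_{i=1}^m c_ix_i+\max_{\mathbf h\in\mathcal U}\ \min_{\mathbf y(\mathbf h)\ge\mathbf 0}\ \sum_{i=1}^m\sum_{j=1}^m d_{ij}y_{ij}(\mathbf h)$$ subject to $x_i+\sum_{j=1}^m y_{ji}(\mathbf h)-\sum_{j=1}^m y_{ij}(\mathbf h)\ge h_i$ for all $i\in[m]$ and all $\mathbf h\in\mathcal U$, and $0\le x_i\le K_i$ for all $i\in[m]$, with data $c_i=0$ for $i\in J_1$, $c_i=1$ for $i\in J_2$, $K_i=1$ for all $i$, $d_{ij}=0$ if $i\in J_1,j\in J_2$ and $d_{ij}=+\infty$ otherwise (so any policy sending positive flow $y_{ij}$ on a pair with $d_{ij}=+\infty$ has infinite cost), and $$\mathcal U=\Big\{\mathbf h\in[0,1]^m \;\Big|\; \sum_{i=1}^m h_i\le m/2\Big\}.$$ Let $z_{\sf AR}(\mathcal U)$ be the optimal value of this problem when $\mathbf y(\mathbf h)\in\mathbb R^{m^2}_+$ may depend arbitrarily on $\mathbf h$, and $z_{\sf Aff}(\mathcal U)$ its optimal value when $\mathbf y(\mathbf h)$ is restricted to be affine in $\mathbf h$, i.e., $\mathbf y(\mathbf h)=\mathbf P\mathbf h+\mathbf q$ with $\mathbf P\in\mathbb R^{m^2\times m}$, $\mathbf q\in\mathbb R^{m^2}$ and $\mathbf P\mathbf h+\mathbf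 q\ge\mathbf 0$ for all $\mathbf h\in\mathcal U$. Then $z_{\sf AR}(\mathcal U)=0$ and $z_{\sf Aff}(\mathcal U)=m/2-1$. In particular, the ratio between the optimal affine and optimal adjustable values is unbounded. *)

(* Defs.v *)
From HB Require Import structures.
From mathcomp Require Import all_boot all_order all_algebra.
From mathcomp Require Import all_classical all_reals.
From mathcomp Require Import ereal.
Set Implicit Arguments. Unset Strict Implicit. Unset Printing Implicit Defensive.
Import Order.TTheory GRing.Theory Num.Theory.
Local Open Scope classical_set_scope.
Local Open Scope ring_scope.

Section Robust.
Variables (R : realType) (m : nat).

(* second-stage cost; d i j in \bar R (0 or +oo here); with MathComp's
   extended multiplication +oo * 0 = 0 and +oo * y = +oo for y > 0, so any
   positive flow on an infinite-cost pair gives infinite cost *)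
Definition rcost (d : 'I_m -> 'I_m -> \bar R) (y : 'I_m -> 'I_m -> R) : \bar R :=
  (\sum_(i < m) \sum_(j < m) (d i j * (y i j)%:E))%E.

Definition ynonneg (y : 'I_m -> 'I_m -> R) : Prop := forall i j, 0 <= y i j.

Definition flow_ok (x : 'I_m -> R) (y : 'I_m -> 'I_m -> R) (h : 'I_m -> R) : Prop :=
  forall i, h i <= x i + \sum_(j < m) y j i - \sum_(j < m) y i j.

Definition first_ok (K x : 'I_m -> R) : Prop := forall i, 0 <= x i <= K i.

Definition lin_cost (c x : 'I_m -> R) : R := \sum_(i < m) c i * x i.

Definition z_AR (c K : 'I_m -> R) (d : 'I_m -> 'I_m -> \bar R)
  (U : set ('I_m -> R)) : \bar R :=
  ereal_inf [set ((lin_cost c x)%:E +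
     ereal_sup [set ereal_inf [set rcost d y | y in [set y | ynonneg y /\ flow_ok x y h]]
               | h in U])%E
   | x in [set x | first_ok K x]].

Definition aff (P : 'I_m -> 'I_m -> 'I_m -> R) (q : 'I_m -> 'I_m -> R)
  (h : 'I_m -> R) : 'I_m -> 'I_m -> R :=
  fun i j => \sum_(k < m) P i j k * h k + q i j.

Definition z_Aff (c K : 'I_m -> R) (d : 'I_m -> 'I_m -> \bar R)
  (U : set ('I_m -> R)) : \bar R :=
  ereal_inf [set ((lin_cost c xPq.1.1)%:E +
                  ereal_sup [set rcost d (aff xPq.1.2 xPq.2 h) | h in U])%E
   | xPq in [set xPq : ('I_m -> R) * ('I_m -> 'I_m -> 'I_m -> R) * ('I_m -> 'I_m -> R) |
       first_ok K xPq.1.1 /\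
       forall h, U h -> ynonneg (aff xPq.1.2 xPq.2 h) /\
                        flow_ok xPq.1.1 (aff xPq.1.2 xPq.2 h) h]].

Definition lot_c (J2 : {set 'I_m}) : 'I_m -> R := fun i => if i \in J2 then 1 else 0.
Definition lot_K : 'I_m -> R := fun _ => 1.
Definition lot_d (J1 J2 : {set 'I_m}) : 'I_m -> 'I_m -> \bar R :=
  fun i j => if (i \in J1) && (j \in J2) then 0%E else +oo%E.
Definition lot_U : set ('I_m -> R) :=
  [set h | (forall i, 0 <= h i <= 1) /\ \sum_(i < m) h i <= m%:R / 2].

End Robust.

(* Main.v *)
Require Import Defs.
From HB Require Import structures.
From mathcomp Require Import all_boot all_order all_algebra.
From mathcomp Require Import all_classical all_reals.
From mathcomp Require Import ereal.
From mathcomp Require Import ring lra zify.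
Import Order.TTheory GRing.Theory Num.Theory.
Local Open Scope ring_scope.

Lemma sub_sum_le (R : realType) (m : nat) (A : {set 'I_m}) (F : 'I_m -> R) :
  (forall k, 0 <= F k) -> \sum_(k in A) F k <= \sum_k F k.
Proof.
move=> F0; rewrite [leRHS](bigID (mem A)) /= lerDl sumr_ge0 //.
Qed.

Lemma one_le_sum (R : realType) (m : nat) (F : 'I_m -> R) j :
  (forall k, 0 <= F k) -> F j <= \sum_k F k.
Proof.
move=> F0; rewrite (bigD1 j) //= lerDl sumr_ge0 //.
Qed.

Lemma sum_cond (R : realType) (m : nat) (A : {set 'I_m}) (b : bool) (F : 'I_m -> R) :
  \sum_k (if (k \in A) && b then F k else 0) = if b then \sum_(k in A) F k else 0.
Proof.
case: b; first by rewrite [RHS]big_mkcond; apply: eq_bigr => k _; rewrite andbT.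
by rewrite big1 // => k _; rewrite andbF.
Qed.

Lemma sum_cond2 (R : realType) (m : nat) (A : {set 'I_m}) (b : bool) (F : 'I_m -> R) :
  \sum_k (if b && (k \in A) then F k else 0) = if b then \sum_(k in A) F k else 0.
Proof.
rewrite -sum_cond; apply: eq_bigr => k _; by rewrite andbC.
Qed.

Definition pt (R : realType) (m : nat) (A : {set 'I_m}) : 'I_m -> R :=
  fun l : 'I_m => if l \in A then (1 : R) else 0.
Arguments pt R {m}.

Lemma sum_pt (R : realType) (m : nat) (A : {set 'I_m}) :
  \sum_l pt R A l = #|A|%:R.
Proof. by rewrite -big_mkcond sumr_const. Qed.

Lemma aff_pt (R : realType) (m : nat) P q (A : {set 'I_m}) i j :
  aff P q (pt R A) i j = \sum_(l in A) P i j l + q i j.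
Proof.
rewrite /aff [X in _ = X + _]big_mkcond; congr (_ + _); apply: eq_bigr => l _.
by rewrite /pt; case: ifP; rewrite ?mulr1 ?mulr0.
Qed.

Lemma rcost0 (R : realType) (m : nat) (J1 J2 : {set 'I_m}) y :
  (forall i j, ~~ ((i \in J1) && (j \in J2)) -> y i j = 0) ->
  rcost (lot_d R J1 J2) y = 0%E.
Proof.
move=> y0; rewrite /rcost; apply: big1 => i _; apply: big1 => j _.
rewrite /lot_d; case: ifP => H; first by rewrite mul0e.
by rewrite (y0 i j) ?H // mule0.
Qed.

Lemma rcost_ge0 (R : realType) (m : nat) (J1 J2 : {set 'I_m}) y :
  ynonneg y -> (0 <= rcost (lot_d R J1 J2) y)%E.
Proof.
move=> yp; rewrite /rcost; apply: sume_ge0 => i _; apply: sume_ge0 => j _.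
apply: mule_ge0; last by rewrite lee_fin.
by rewrite /lot_d; case: ifP => _ //; rewrite leey.
Qed.

Lemma rcost_oo (R : realType) (m : nat) (J1 J2 : {set 'I_m}) y i j :
  ynonneg y -> ~~ ((i \in J1) && (j \in J2)) -> 0 < y i j ->
  rcost (lot_d R J1 J2) y = +oo%E.
Proof.
move=> yp nij pos; apply/eqP; rewrite eq_le leey /= /rcost.
rewrite (bigD1 i) //=; apply: le_trans (leeDl _ _); last first.
  apply: sume_ge0 => k _; apply: sume_ge0 => l _; apply: mule_ge0; last by rewrite lee_fin.
  by rewrite /lot_d; case: ifP => _ //; rewrite leey.
rewrite (bigD1 j) //=; apply: le_trans (leeDl _ _); last first.
  apply: sume_ge0 => l _; apply: mule_ge0; last by rewrite lee_fin.
  by rewrite /lot_d; case: ifP => _ //; rewrite leey.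
by rewrite /lot_d (negbTE nij) mulyr gtr0_sg // mul1e.
Qed.

Lemma lin_costE (R : realType) (m : nat) (J2 : {set 'I_m}) x :
  lin_cost (lot_c R J2) x = \sum_(i in J2) x i.
Proof.
rewrite /lin_cost [RHS]big_mkcond; apply: eq_bigr => i _.
by rewrite /lot_c; case: ifP; rewrite ?mul1r ?mul0r.
Qed.

Theorem lemma10 (R : realType) (m : nat) (J1 J2 : {set 'I_m}) :
  (2 <= m)%N -> ~~ odd m ->
  [disjoint J1 & J2] -> J1 :|: J2 = [set: 'I_m] ->
  #|J1| = m./2 -> #|J2| = m./2 ->
  z_AR (lot_c R J2) (@lot_K R m) (lot_d R J1 J2) (@lot_U R m) = 0%E /\
  z_Aff (lot_c R J2) (@lot_K R m) (lot_d R J1 J2) (@lot_U R m) = (m%:R / 2 - 1)%:E.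
Proof.
move=> m2 modd dis cov c1 c2.
set n := m./2 in c1 c2 *.
have mE : m = n.*2 by rewrite -[m in LHS]odd_double_half (negbTE modd).
have n1 : (1 <= n)%N by move: m2; rewrite mE -muln2; lia.
have nR : m%:R / 2 = n%:R :> R.
  by rewrite mE -muln2 natrM mulfK // pnatr_eq0.
have nR0 : 0 < n%:R :> R by rewrite ltr0n.
have nR1 : 1 <= n%:R :> R by rewrite ler1n.
have nRne : n%:R != 0 :> R by rewrite gt_eqF.
have J2E : forall i, (i \in J2) = (i \notin J1).
  move=> i; have := cov; move/setP/(_ i); rewrite !inE.
  case: (boolP (i \in J1)) => iJ1 /=; last by [].
  by move=> _; rewrite (disjointFr dis iJ1).
have sJ : forall F : 'I_m -> R, \sum_k F k = \sum_(k in J1) F k + \sum_(k in J2) F k.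
  by move=> F; rewrite (bigID (mem J1)) /=; congr (_ + _); apply: eq_bigl => k; rewrite J2E.
have ptU : forall A : {set 'I_m}, (#|A| <= n)%N -> @lot_U R m (pt R A).
  move=> A cA; split => [i|]; first by rewrite /pt; case: ifP => _; rewrite lexx ?ler01.
  by rewrite sum_pt nR ler_nat.
split.
- apply/eqP; rewrite eq_le; apply/andP; split; last first.
    apply: le_ereal_inf_tmp => _ [x Hx <-].
    apply: adde_ge0.
      rewrite lee_fin lin_costE sumr_ge0 // => i _; by case/andP: (Hx i).
    apply: le_trans; last first.
      apply: ereal_sup_ubound; exists (pt R (finset.set0)); first by apply: ptU; rewrite cards0.
      reflexivity.
    apply: le_ereal_inf_tmp => _ [y [yp _] <-]; exact: rcost_ge0.
  pose x0 := fun i : 'I_m => if i \in J2 then (0:R) else 1.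
  apply: le_trans; first by apply: ereal_inf_lbound; exists x0; last reflexivity; move=> i; rewrite /x0 /lot_K; case: ifP => _; rewrite lexx ler01.
  rewrite lin_costE big1 ?add0e; last by move=> i; rewrite /x0 => ->.
  apply: ge_ereal_sup => _ [h [h01 hs] <-].
  rewrite nR in hs.
  pose S := \sum_(k in J1) (1 - h k).
  pose D := \sum_(k in J2) h k.
  have S0 : 0 <= S by apply: sumr_ge0 => k _; case/andP: (h01 k) => _ ?; lra.
  have hge : forall k, 0 <= h k by move=> k; case/andP: (h01 k).
  have hle : forall k, h k <= 1 by move=> k; case/andP: (h01 k).
  have DS : D <= S.
    move: hs; rewrite sJ /S sumrB sumr_const c1 -/D; lra.
  pose y := fun i j => if (i \in J1) && (j \in J2) then (1 - h i) * h j / S else 0.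
  have yok : ynonneg y /\ flow_ok x0 y h.
    split.
    - move=> i j; rewrite /y; case: ifP => _ //.
      by apply: divr_ge0 => //; apply: mulr_ge0 => //; rewrite subr_ge0.
    - move=> i; rewrite /y sum_cond sum_cond2 /x0 J2E.
      case: (boolP (i \in J1)) => iJ1 /=.
        rewrite -mulr_suml -mulr_sumr -/D addr0.
        have : (1 - h i) * D / S <= 1 - h i.
          rewrite -mulrA; apply: ler_piMr; first by rewrite subr_ge0.
          have [->|Sne] := eqVneq S 0; first by rewrite invr0 mulr0 ler01.
          rewrite ler_pdivrMr ?mul1r //; rewrite lt_def Sne S0 //.
        lra.
      rewrite -mulr_suml -/S subr0 add0r.
      have [S0e|Sne] := eqVneq S 0.
        rewrite S0e invr0 mulr0.
        have : h i <= D by rewrite /D (bigD1 i) ?J2E //= lerDl sumr_ge0.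
        lra.
      rewrite -mulr_suml -/S mulrAC divff // mul1r. done.
  apply: le_trans; first by apply: ereal_inf_lbound; exists y; [exact: yok|reflexivity].
  rewrite rcost0 // => i j nij; rewrite /y (negbTE nij).
  done.
- rewrite nR; apply/eqP; rewrite eq_le; apply/andP; split.
  + pose xa := fun i : 'I_m => if i \in J2 then (n%:R - 1) / n%:R else (1:R).
    pose Pa := fun i j k : 'I_m => if (i \in J1) && (j \in J2) && (k == i) then - n%:R^-1 else (0:R).
    pose qa := fun i j : 'I_m => if (i \in J1) && (j \in J2) then n%:R^-1 else (0:R).
    have affE : forall h i j, aff Pa qa h i j =
        if (i \in J1) && (j \in J2) then (1 - h i) / n%:R else 0.
      move=> h i j; rewrite /aff /Pa /qa; case: ifP => c /=.
        rewrite (bigD1 i) //= eqxx big1 => [|k /negbTE ->]; last by rewrite mul0r.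
        by rewrite addr0; ring.
      by rewrite big1 ?add0r // => k _; rewrite mul0r.
    have feas : first_ok (@lot_K R m) xa /\ forall h, @lot_U R m h ->
        ynonneg (aff Pa qa h) /\ flow_ok xa (aff Pa qa h) h.
      split.
        move=> i; rewrite /xa /lot_K; case: ifP => _; last by rewrite ler01 lexx.
        apply/andP; split; first by apply: divr_ge0; lra.
        by rewrite ler_pdivrMr //; lra.
      move=> h [h01 hs]; rewrite nR in hs.
      have hge : forall k, 0 <= h k by move=> k; case/andP: (h01 k).
      have hle : forall k, h k <= 1 by move=> k; case/andP: (h01 k).
      split.
        move=> i j; rewrite affE; case: ifP => _ //.
        by apply: divr_ge0; [rewrite subr_ge0|lra].
      move=> i; under eq_bigr do rewrite affE; under [X in _ - X]eq_bigr do rewrite affE.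
      rewrite sum_cond sum_cond2 /xa J2E; case: (boolP (i \in J1)) => iJ1 /=.
        rewrite sumr_const c2 -[_ *+ n]mulr_natr divfK //; lra.
      rewrite -mulr_suml sumrB sumr_const c1 subr0.
      have hs2 : \sum_(k in J1) h k + h i <= \sum_k h k.
        by rewrite (sJ h) lerD2l (bigD1 i) ?J2E //= lerDl sumr_ge0.
      rewrite -mulrDl ler_pdivlMr //.
      have := mulr_ge0 (_ : 0 <= 1 - h i) (_ : 0 <= n%:R - 1); rewrite ?subr_ge0 //.
      move=> /(_ (hle i) nR1) => hh.
      rewrite -[1 *+ n]mulr_natr mul1r; nra.
    apply: le_trans; first by apply: ereal_inf_lbound; exists ((xa, Pa), qa); [exact: feas|reflexivity].
    rewrite /= lin_costE (eq_bigr (fun _ => (n%:R - 1) / n%:R)); last by move=> i; rewrite /xa => ->.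
    rewrite sumr_const c2 -[_ *+ n]mulr_natr divfK //.
    rewrite -[X in (_ <= X)%E]adde0; apply: leeD => //.
    apply: ge_ereal_sup => _ [h Uh <-]; rewrite rcost0 // => i j c; by rewrite affE (negbTE c).
  + apply: le_ereal_inf_tmp => _ [[[x P] q] [Hx Hy] <-] /=.
    move: Hx Hy => /= Hx Hy.
    have hx : forall i, 0 <= x i <= 1 by move=> i; exact: (Hx i).
    have hx0 : forall i, 0 <= x i by move=> i; case/andP: (hx i).
    have hx1 : forall i, x i <= 1 by move=> i; case/andP: (hx i).
    case: (pselect (exists h, @lot_U R m h /\ exists i j,
        ~~ ((i \in J1) && (j \in J2)) /\ 0 < aff P q h i j)) =>
        [[h [Uh [i [j [nij pos]]]]] | Hno].
      have -> : ereal_sup [set rcost (lot_d R J1 J2) (aff P q h0) | h0 in @lot_U R m] = +oo%E.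
        apply/eqP; rewrite eq_le leey /=.
        rewrite -(@rcost_oo R m J1 J2 _ i j (proj1 (Hy h Uh)) nij pos); apply: ereal_sup_ubound; by exists h.
      by rewrite addey // leey.
    have Z0 : forall h, @lot_U R m h -> forall i j, ~~ ((i \in J1) && (j \in J2)) ->
        aff P q h i j = 0.
      move=> h Uh i j nij; apply/eqP; rewrite eq_le (proj1 (Hy h Uh) i j) andbT leNgt.
      apply/negP => pos; apply: Hno; exists h; split => //; exists i, j; by split.
    have key : n%:R - 1 <= \sum_(j in J2) x j.
      have [n1e|n1ne] := eqVneq n 1%N.
        by rewrite n1e subrr sumr_ge0.
      have n2 : (2 <= n)%N by lia.
      have flowJ1 : forall h, @lot_U R m h -> forall i, i \in J1 ->
          \sum_k aff P q h i k <= x i - h i.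
        move=> h Uh i iJ1; have := (proj2 (Hy h Uh)) i.
        rewrite big1 ?addr0 => [|k _]; first by lra.
        by apply: Z0 => //; rewrite J2E iJ1 andbF.
      have Zf : forall h, @lot_U R m h -> forall i, i \in J1 -> h i = 1 ->
          forall j, aff P q h i j = 0.
        move=> h Uh i iJ1 hi1 j; have nn := proj1 (Hy h Uh).
        have := flowJ1 h Uh i iJ1; have := @one_le_sum R m (aff P q h i) j (nn i); have := nn i j.
        have := hx1 i; lra.
      have P0 : forall i j k, i \in J1 -> k != i -> P i j k = 0.
        move=> i j k iJ1 ki.
        have e1 := Zf (pt R [set i]) (ptU _ _) i iJ1 _ j.
        rewrite aff_pt big_set1 /pt inE eqxx cards1 in e1.
        have e2 := Zf (pt R [set i; k]) (ptU _ _) i iJ1 _ j.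
        rewrite aff_pt big_setU1 ?big_set1 /pt ?inE ?eqxx ?cards2 in e2; last by rewrite eq_sym.
        have h2 : ((i != k) < n)%N by case: (i != k); lia.
        have := e1 n1 erefl; have := e2 h2 erefl => /=.
        lra.
      have affq : forall h i j, i \in J1 -> h i = 0 -> aff P q h i j = q i j.
        move=> h i j iJ1 hi0; rewrite /aff big1 ?add0r // => k _.
        have [->|ne] := eqVneq k i; first by rewrite hi0 mulr0.
        by rewrite P0 // mul0r.
      have U0 : @lot_U R m (pt R finset.set0) by apply: ptU; rewrite cards0.
      have q0 : forall i j, i \in J1 -> 0 <= q i j.
        move=> i j iJ1; rewrite -(affq (pt R finset.set0) i j iJ1); last by rewrite /pt inE.
        exact: (proj1 (Hy _ U0)).
      have Sq : forall i, i \in J1 -> \sum_(j in J2) q i j <= 1.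
        move=> i iJ1; have := flowJ1 _ U0 i iJ1.
        rewrite (eq_bigr (fun j => q i j)); last by move=> j _; rewrite affq // /pt inE.
        have := @sub_sum_le R m J2 (q i) (q0 i ^~ iJ1); have := hx1 i.
        rewrite /pt inE; lra.
      have B : forall j i0, j \in J2 -> i0 \in J1 -> 1 <= x j + q i0 j.
        move=> j i0 jJ2 i0J1.
        have jN1 : (j \in J1) = false by apply/negbTE; rewrite -J2E.
        pose A := j |: (J1 :\ i0).
        have UA : @lot_U R m (pt R A).
          apply: ptU; rewrite /A cardsU1; have := cardsD1 i0 J1; rewrite i0J1 c1.
          have := leq_b1 (j \notin J1 :\ i0); lia.
        have := (proj2 (Hy _ UA)) j.
        rewrite [X in _ - X]big1 => [|k _]; last by apply: Z0 => //; rewrite jN1.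
        rewrite (bigD1 i0) //= big1 => [|k nk].
          rewrite affq //; last by rewrite /pt /A !inE eqxx andFb orbF; case: eqP => // e; rewrite e jN1 in i0J1.
          by rewrite /pt /A !inE eqxx /=; lra.
        case: (boolP (k \in J1)) => kJ1.
          by apply: Zf => //; rewrite /pt /A !inE nk kJ1 orbT.
        by apply: Z0 => //; rewrite (negbTE kJ1).
      have H1 : \sum_(j in J2) \sum_(i in J1) (1 - x j) <= \sum_(j in J2) \sum_(i in J1) q i j.
        by apply: ler_sum => j jJ2; apply: ler_sum => i iJ1; have := B j i jJ2 iJ1; lra.
      rewrite [X in _ <= X]exchange_big /= in H1.
      have H2 : \sum_(i in J1) \sum_(j in J2) q i j <= n%:R.
        rewrite -c1 -sum1_card natr_sum; apply: ler_sum => i iJ1; exact: Sq.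
      have H3 : \sum_(j in J2) \sum_(i in J1) (1 - x j) = (n%:R - \sum_(j in J2) x j) * n%:R.
        under eq_bigr do rewrite sumr_const c1.
        by rewrite sumrMnl sumrB sumr_const c2 mulr_natr.
      have H4 : (n%:R - \sum_(j in J2) x j) * n%:R <= 1 * n%:R by rewrite mul1r -H3; lra.
      rewrite ler_pM2r // in H4; lra.
    apply: le_trans (_ : (lin_cost (lot_c R J2) x)%:E <= _)%E.
      by rewrite lee_fin lin_costE.
    apply: leeDl; apply: le_trans; last first.
      apply: ereal_sup_ubound; exists (pt R (finset.set0)); first by apply: ptU; rewrite cards0.
      reflexivity.
    apply: rcost_ge0; apply: (proj1 (Hy _ _)); apply: ptU; by rewrite cards0.
Qed.
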